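(* If the additive group of a ring $K$ is finitely generated, then $K$ is finitely separable.
   Context: Rings are associative and not necessarily unital. A ring $K$ is finitely separable if for every $a\in K$ and every subring $A\subseteq K$ with $a\notin A$ there exist a finite ring $F$ and a homomorphism $\varphi:K\to F$ with $\varphi(a)\notin\varphi(A)$. *)

(* Defs.v *)
From HB Require Import structures.
From mathcomp Require Import all_boot all_order all_algebra.
Set Implicit Arguments. Unset Strict Implicit. Unset Printing Implicit Defensive.
Import GRing.Theory.
Local Open Scope ring_scope.

(* Associative, not necessarily unital rings: an additive abelian group
   with an associative, bi-distributive multiplication (no unit required). *)
Record nuRing := NuRing {
  nu_sort :> zmodType;
  nu_mul : nu_sort -> nu_sort -> nu_sort;
  nu_mulA : associative nu_mul;
  nu_mulDl : left_distributive nu_mul +%R;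
  nu_mulDr : right_distributive nu_mul +%R }.

Definition nu_subring (K : nuRing) (A : pred K) : Prop :=
  [/\ 0 \in A,
      forall x y, x \in A -> y \in A -> x - y \in A &
      forall x y, x \in A -> y \in A -> nu_mul x y \in A].

Definition nu_hom (K F : nuRing) (f : K -> F) : Prop :=
  (forall x y, f (x + y) = f x + f y) /\
  (forall x y, f (nu_mul x y) = nu_mul (f x) (f y)).

Definition nu_finite (F : nuRing) : Prop :=
  exists s : seq F, forall x : F, x \in s.

Definition additively_fg (K : nuRing) : Prop :=
  exists s : seq K, forall x : K,
    exists c : 'I_(size s) -> int, x = \sum_(i < size s) s`_i *~ c i.

Definition finitely_separable (K : nuRing) : Prop :=
  forall (a : K) (A : pred K), nu_subring A -> a \notin A ->
    exists (F : nuRing) (f : K -> F),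
      [/\ nu_finite F, nu_hom f & forall b, b \in A -> f b != f a].

(* Main.v *)
Require Import Defs.
From mathcomp Require Import all_boot all_order all_algebra.
From HB Require Import structures.
From mathcomp Require Import zify ring.
From Stdlib Require Import Classical ClassicalEpsilon FunctionalExtensionality.
Set Implicit Arguments. Unset Strict Implicit. Unset Printing Implicit Defensive.
Import GRing.Theory Num.Theory.
Local Open Scope ring_scope.
Lemma least_nat (P : nat -> Prop) : (exists n, P n) ->
  exists n, P n /\ forall k, P k -> (n <= k)%N.
Proof.
case=> n Pn.
suff H: forall N n, (n <= N)%N -> P n -> exists n, P n /\ forall k, P k -> (n <= k)%N.
  exact: (H n n (leqnn n) Pn).
elim=> [|N IH] m hm Pm.
  exists m; split => // k _; by move: hm; rewrite leqn0 => /eqP ->.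
case: (classic (exists k, P k /\ (k < m)%N)) => [[k [Pk lt]]|nok].
  by apply: (IH k) => //; lia.
exists m; split => // k Pk; case: (leqP m k) => // ltk; exfalso; apply: nok; eauto.
Qed.

Lemma imul (I : int -> Prop) : I 0 -> (forall x y, I x -> I y -> I (x - y)) ->
  forall k x, I x -> I (k * x).
Proof.
move=> I0 IB k x Ix.
have Hn : forall n : nat, I (n%:Z * x).
  elim=> [|n IH]; first by rewrite mul0r.
  have -> : (n.+1)%:Z * x = n%:Z * x - (0 - x) by rewrite -addn1 PoszD; ring.
  by apply: (IB) => //; apply: (IB).
case: k => n; first exact: Hn.
rewrite NegzE.
have -> : (- (n.+1)%:Z) * x = 0 - (n.+1)%:Z * x by ring.
by apply: (IB).
Qed.

Lemma int_subgroup (I : int -> Prop) : I 0 -> (forall x y, I x -> I y -> I (x - y)) ->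
  exists d : nat, I d%:Z /\ forall u, I u -> exists j, u = j * d%:Z.
Proof.
move=> I0 IB.
case: (classic (exists u, I u /\ u != 0)) => [[u [Iu u0]]|no]; last first.
  exists 0%N; split => // x Ix; exists 0; rewrite mul0r.
  by apply/eqP; apply: contraT => nx; case: no; exists x.
have Iabs : I (`|u|%N)%:Z.
  case: (lerP 0 u) => hu; first by rewrite gez0_abs.
  by rewrite ltz0_abs // -sub0r; apply: (IB).
have [k0 [[k0p Ik0] mink]] := @least_nat (fun k => (0 < k)%N /\ I k%:Z)
   (ex_intro _ `|u|%N (conj (eq_ind_r is_true u0 (absz_gt0 u) : (0 < `|u|)%N) Iabs)).
exists k0; split => // x Ix.
exists (x %/ k0%:Z)%Z.
have d0 : k0%:Z != 0 by rewrite eqz_nat -lt0n.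
have Ir : I (x %% k0%:Z)%Z.
  have -> : (x %% k0%:Z)%Z = x - (x %/ k0%:Z)%Z * k0%:Z by rewrite {2}(divz_eq x k0%:Z); ring.
  by apply: (IB) => //; apply: imul.
have r0 := modz_ge0 x d0.
have rlt : (x %% k0%:Z)%Z < k0%:Z by apply: ltz_pmod; rewrite ltz_nat.
case: (eqVneq (x %% k0%:Z)%Z 0) => [r00|rn0].
  by rewrite {1}(divz_eq x k0%:Z) r00 addr0.
exfalso.
have := mink `|(x %% k0%:Z)%Z|%N; rewrite gez0_abs //.
move=> /(_ (conj _ Ir)) H.
have : (k0 <= `|(x %% k0%:Z)%Z|)%N.
  apply: H. by rewrite absz_gt0.
move: rlt r0; lia.
Qed.

Definition supp n (x : nat -> int) := forall i, (n <= i)%N -> x i = 0.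
Definition subgrp (L : (nat -> int) -> Prop) :=
  L (fun _ => 0) /\ forall x y, L x -> L y -> L (fun i => x i - y i).

Lemma Lmul L k y : subgrp L -> L y -> L (fun i => k * y i).
Proof.
move=> [L0 LB] Ly.
pose J (c : int) := L (fun i => c * y i).
have J0 : J 0 by rewrite /J; have -> : (fun i => 0 * y i) = (fun _ => 0)
  by apply: functional_extensionality => i; rewrite mul0r.
have JB : forall a b, J a -> J b -> J (a - b).
  move=> a b Ja Jb; rewrite /J.
  have -> : (fun i => (a - b) * y i) = (fun i => a * y i - b * y i)
    by apply: functional_extensionality => i; rewrite mulrBl.
  exact: (LB).
have J1 : J 1 by rewrite /J; have -> : (fun i => 1 * y i) = y
  by apply: functional_extensionality => i; rewrite mul1r.
have := @imul J J0 JB k 1 J1; rewrite mulr1 //.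
Qed.

Lemma Ladd L x y : subgrp L -> L x -> L y -> L (fun i => x i + y i).
Proof.
move=> [L0 LB] Lx Ly.
have -> : (fun i => x i + y i) = (fun i => x i - (fun j => 0 - y j) i)
  by apply: functional_extensionality => i /=; rewrite sub0r opprK.
apply: (LB) => //; exact: (LB).
Qed.

Lemma sepZ n : forall L v, subgrp L -> (forall x, L x -> supp n x) -> supp n v -> ~ L v ->
  exists m : nat, (0 < m)%N /\ forall z w, L z -> ~ (forall i, v i = z i + m%:Z * w i).
Proof.
elim: n => [|n IH] L v sL suppL sv nLv.
  exfalso; apply: nLv.
  have -> : v = (fun _ => 0) by apply: functional_extensionality => i; apply: sv.
  exact: sL.1.
have [L0 LB] := sL.
pose I u := exists z, L z /\ z n = u.
have I0 : I 0 by exists (fun _ => 0).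
have IB : forall x y, I x -> I y -> I (x - y).
  by move=> x y [zx [Lx <-]] [zy [Ly <-]]; exists (fun i => zx i - zy i); split => //; exact: (LB).
have [d [[y1 [Ly1 y1n]] gen]] := @int_subgroup I I0 IB.
case: (classic (I (v n))) => [[y0 [Ly0 y0n]] | nI]; last first.
  case: (posnP d) => [d0|dpos].
    exists (`|v n|%N.+1); split => // z w Lz H.
    have [j zj] := gen (z n) (ex_intro _ z (conj Lz erefl)).
    move: zj; rewrite d0 mulr0 => zn0.
    have := H n; rewrite zn0 add0r => H2.
    have := congr1 absz H2; rewrite abszM /= => H3.
    have : (`|w n| = 0)%N by nia.
    move/eqP; rewrite absz_eq0 => /eqP wn0.
    by apply: nI; rewrite H2 wn0 mulr0.
  exists d; split => // z w Lz H.
  apply: nI; rewrite (H n).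
  have -> : z n + d%:Z * w n = z n - (0 - w n * d%:Z) by ring.
  apply: (IB); first by exists z.
  apply: (IB) => //; apply: (@imul I) => //; by exists y1.
pose x' := fun i => v i - y0 i.
pose L0' := fun z => L z /\ z n = 0.
have sL0 : subgrp L0'.
  split; first by split.
  move=> x y [Lx xn] [Ly yn]; split; first exact: (LB).
  by rewrite xn yn subr0.
have suppL0 : forall x, L0' x -> supp n x.
  move=> x [Lx xn] i; rewrite leq_eqVlt => /orP [/eqP <- //|lt]; exact: suppL.
have sx' : supp n x'.
  move=> i; rewrite leq_eqVlt => /orP [/eqP <-|lt]; first by rewrite /x' y0n subrr.
  by rewrite /x' sv // suppL // subrr.
have nL0 : ~ L0' x'.
  move=> [Lx' _]; apply: nLv.
  have -> : v = (fun i => x' i + y0 i) by apply: functional_extensionality => i; rewrite /x' subrK.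
  exact: Ladd.
have [m' [m'p Hm']] := IH L0' x' sL0 suppL0 sx' nL0.
case: (posnP d) => [d0|dpos].
  exists m'; split => // z w Lz H.
  apply: (Hm' (fun i => z i - y0 i) w).
    split; first exact: (LB).
    have [j ->] := gen (z n - y0 n) (ex_intro _ (fun i => z i - y0 i) (conj (LB _ _ Lz Ly0) erefl)).
    by rewrite d0 mulr0.
  by move=> i; rewrite /x' H; ring.
exists (m' * d)%N; split; first by rewrite muln_gt0 m'p dpos.
move=> z w Lz H.
pose q := - w n.
apply: (Hm' (fun i => z i - y0 i - (m'%:Z * q) * y1 i) (fun i => q * y1 i + d%:Z * w i)).
  split; first by apply: (LB); [exact: (LB) | exact: Lmul].
  have Hn := H n; rewrite -y0n in Hn.
  rewrite y1n /q Hn PoszM; ring.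
by move=> i; rewrite /x' H PoszM; ring.
Qed.
Lemma mul0l (K : nuRing) (y : K) : nu_mul 0 y = 0.
Proof.
have h := @nu_mulDl K 0 0 y; rewrite addr0 in h.
by apply: (addrI (nu_mul 0 y)); rewrite addr0 -h.
Qed.
Lemma mul0r (K : nuRing) (y : K) : nu_mul y 0 = 0.
Proof.
have h := @nu_mulDr K y 0 0; rewrite addr0 in h.
by apply: (addrI (nu_mul y 0)); rewrite addr0 -h.
Qed.
Lemma mulNl (K : nuRing) (x y : K) : nu_mul (- x) y = - nu_mul x y.
Proof.
apply/eqP; rewrite -addr_eq0 -nu_mulDl addNr; exact/eqP/mul0l.
Qed.
Lemma mulNr (K : nuRing) (x y : K) : nu_mul y (- x) = - nu_mul y x.
Proof.
apply/eqP; rewrite -addr_eq0 -nu_mulDr addNr; exact/eqP/mul0r.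
Qed.
Lemma mulBl (K : nuRing) (x z y : K) : nu_mul (x - z) y = nu_mul x y - nu_mul z y.
Proof. by rewrite nu_mulDl mulNl. Qed.
Lemma mulBr (K : nuRing) (x z y : K) : nu_mul y (x - z) = nu_mul y x - nu_mul y z.
Proof. by rewrite nu_mulDr mulNr. Qed.
Lemma mulMnl (K : nuRing) (x y : K) k : nu_mul (x *+ k) y = nu_mul x y *+ k.
Proof. elim: k => [|k IH]; first by rewrite !mulr0n mul0l. by rewrite !mulrS nu_mulDl IH. Qed.
Lemma mulMnr (K : nuRing) (x y : K) k : nu_mul y (x *+ k) = nu_mul y x *+ k.
Proof. elim: k => [|k IH]; first by rewrite !mulr0n mul0r. by rewrite !mulrS nu_mulDr IH. Qed.

Definition eqm (K : nuRing) (m : nat) (x y : K) : Prop := exists w : K, x - y = w *+ m.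

Lemma eqm_refl (K : nuRing) (m : nat) (x : K) : eqm m x x.
Proof. by exists 0; rewrite subrr mul0rn. Qed.
Lemma eqm_sym (K : nuRing) (m : nat) (x y : K) : eqm m x y -> eqm m y x.
Proof. by case=> w h; exists (- w); rewrite mulNrn -h opprB. Qed.
Lemma eqm_trans (K : nuRing) (m : nat) (x y z : K) : eqm m x y -> eqm m y z -> eqm m x z.
Proof. by case=> w h [w' h']; exists (w + w'); rewrite mulrnDl -h -h' addrA subrK. Qed.
Lemma eqm_add (K : nuRing) (m : nat) (x y x' y' : K) : eqm m x x' -> eqm m y y' -> eqm m (x + y) (x' + y').
Proof.
case=> w h [w' h']; exists (w + w'); rewrite mulrnDl -h -h'.
by rewrite opprD addrACA.
Qed.
Lemma eqm_opp (K : nuRing) (m : nat) (x x' : K) : eqm m x x' -> eqm m (- x) (- x').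
Proof. by case=> w h; exists (- w); rewrite mulNrn -h opprB opprK addrC. Qed.
Lemma eqm_mul (K : nuRing) (m : nat) (x y x' y' : K) : eqm m x x' -> eqm m y y' ->
  eqm m (nu_mul x y) (nu_mul x' y').
Proof.
case=> w h [w' h']; exists (nu_mul w y + nu_mul x' w').
have -> : nu_mul x y - nu_mul x' y' = nu_mul (x - x') y + nu_mul x' (y - y').
  by rewrite mulBl mulBr addrA subrK.
by rewrite h h' mulMnl mulMnr mulrnDl.
Qed.

Definition eqmb (K : nuRing) (m : nat) (x y : K) : bool :=
  if excluded_middle_informative (eqm m x y) then true else false.
Lemma eqmbP (K : nuRing) (m : nat) (x y : K) : reflect (eqm m x y) (eqmb m x y).
Proof. by rewrite /eqmb; case: excluded_middle_informative => h; constructor. Qed.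

Lemma exrep (K : nuRing) (m : nat) (x : K) : exists y, eqmb m x y.
Proof. by exists x; apply/eqmbP; apply: eqm_refl. Qed.
Definition rep (K : nuRing) (m : nat) (x : K) : K := xchoose (exrep m x).

Lemma repE (K : nuRing) (m : nat) (x : K) : eqm m x (rep m x).
Proof. exact/eqmbP/(xchooseP (exrep m x)). Qed.
Lemma rep_eq (K : nuRing) (m : nat) (x y : K) : eqm m x y -> rep m x = rep m y.
Proof.
move=> h; apply: eq_xchoose => z; apply/eqmbP/eqmbP => h2.
  exact: eqm_trans (eqm_sym h) h2.
exact: eqm_trans h h2.
Qed.
Lemma rep_idem (K : nuRing) (m : nat) (x : K) : rep m (rep m x) = rep m x.
Proof. by apply: rep_eq; apply: eqm_sym; apply: repE. Qed.

Definition Qt (K : nuRing) (m : nat) := {x : K | rep m x == x}.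
HB.instance Definition _ (K : nuRing) (m : nat) := Choice.on (Qt K m).

Definition piq (K : nuRing) (m : nat) (x : K) : Qt K m := exist _ (rep m x) (introT eqP (rep_idem m x)).

Lemma piq_val (K : nuRing) (m : nat) (q : Qt K m) : piq m (val q) = q.
Proof. by apply: val_inj => /=; apply/eqP; case: q. Qed.
Lemma piqP (K : nuRing) (m : nat) (x y : K) : eqm m x y -> piq m x = piq m y.
Proof. by move=> h; apply: val_inj => /=; apply: rep_eq. Qed.
Lemma piq_eq (K : nuRing) (m : nat) (x y : K) : piq m x = piq m y -> eqm m x y.
Proof.
move/(congr1 val) => /= h.
apply: eqm_trans (repE m x) _; rewrite h; exact/eqm_sym/repE.
Qed.
Lemma Qind (K : nuRing) (m : nat) (P : Qt K m -> Prop) : (forall x, P (piq m x)) -> forall q, P q.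
Proof. by move=> h q; rewrite -(piq_val q). Qed.
Lemma val_piq (K : nuRing) (m : nat) (x : K) : eqm m (val (piq m x)) x.
Proof. exact/eqm_sym/repE. Qed.

Definition qzero (K : nuRing) (m : nat) : Qt K m := piq m 0.
Definition qadd (K : nuRing) (m : nat) (p q : Qt K m) : Qt K m := piq m (val p + val q).
Definition qopp (K : nuRing) (m : nat) (p : Qt K m) : Qt K m := piq m (- val p).
Definition qmul (K : nuRing) (m : nat) (p q : Qt K m) : Qt K m := piq m (nu_mul (val p) (val q)).

Lemma qaddE (K : nuRing) (m : nat) (x y : K) : qadd (piq m x) (piq m y) = piq m (x + y).
Proof. by apply: piqP; apply: eqm_add; apply: val_piq. Qed.
Lemma qoppE (K : nuRing) (m : nat) (x : K) : qopp (piq m x) = piq m (- x).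
Proof. by apply: piqP; apply: eqm_opp; apply: val_piq. Qed.
Lemma qmulE (K : nuRing) (m : nat) (x y : K) : qmul (piq m x) (piq m y) = piq m (nu_mul x y).
Proof. by apply: piqP; apply: eqm_mul; apply: val_piq. Qed.

Lemma qaddA (K : nuRing) (m : nat) : associative (@qadd K m).
Proof. by elim/Qind => x; elim/Qind => y; elim/Qind => z; rewrite !qaddE addrA. Qed.
Lemma qaddC (K : nuRing) (m : nat) : commutative (@qadd K m).
Proof. by elim/Qind => x; elim/Qind => y; rewrite !qaddE addrC. Qed.
Lemma qadd0 (K : nuRing) (m : nat) : left_id (@qzero K m) (@qadd K m).
Proof. by elim/Qind => x; rewrite /qzero qaddE add0r. Qed.
Lemma qaddN (K : nuRing) (m : nat) : left_inverse (@qzero K m) (@qopp K m) (@qadd K m).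
Proof. by elim/Qind => x; rewrite qoppE qaddE addNr. Qed.

HB.instance Definition _ (K : nuRing) (m : nat) := GRing.isZmodule.Build (Qt K m)
  (@qaddA K m) (@qaddC K m) (@qadd0 K m) (@qaddN K m).

Lemma qplusE (K : nuRing) (m : nat) (p q : Qt K m) : p + q = qadd p q.
Proof. by []. Qed.

Lemma qmulA (K : nuRing) (m : nat) : associative (@qmul K m).
Proof. by elim/Qind => x; elim/Qind => y; elim/Qind => z; rewrite !qmulE nu_mulA. Qed.
Lemma qmulDl (K : nuRing) (m : nat) : left_distributive (@qmul K m) +%R.
Proof. by elim/Qind => x; elim/Qind => y; elim/Qind => z; rewrite !qplusE !(qaddE, qmulE) nu_mulDl. Qed.
Lemma qmulDr (K : nuRing) (m : nat) : right_distributive (@qmul K m) +%R.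
Proof. by elim/Qind => x; elim/Qind => y; elim/Qind => z; rewrite !qplusE !(qaddE, qmulE) nu_mulDr. Qed.

Definition QR (K : nuRing) (m : nat) : nuRing :=
  @NuRing (Qt K m) (@qmul K m) (@qmulA K m) (@qmulDl K m) (@qmulDr K m).

Lemma QR_hom (K : nuRing) (m : nat) : nu_hom (fun x : K => (piq m x : QR K m)).
Proof. by split => x y /=; [rewrite qplusE qaddE | rewrite qmulE]. Qed.

Lemma eqm_sum (K : nuRing) (m : nat) n (F G : 'I_n -> K) :
  (forall i, eqm m (F i) (G i)) -> eqm m (\sum_(i < n) F i) (\sum_(i < n) G i).
Proof.
move=> h; apply: (@big_ind2 _ _ (@eqm K m)) => //.
- exact: eqm_refl.
- by move=> *; apply: eqm_add.
Qed.

Lemma QR_fin (K : nuRing) (m : nat) (s : seq K) : (0 < m)%N ->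
  (forall x : K, exists c : 'I_(size s) -> int, x = \sum_(i < size s) s`_i *~ c i) ->
  nu_finite (QR K m).
Proof.
move=> mp hs.
exists [seq piq m (\sum_(i < size s) s`_i *+ val (k i)) | k : {ffun 'I_(size s) -> 'I_m} <- enum {ffun 'I_(size s) -> 'I_m}].
elim/Qind => x; have [c ->] := hs x.
have md : m%:Z != 0 by rewrite eqz_nat -lt0n.
have kb : forall i, (`|(c i %% m%:Z)%Z|%N < m)%N.
  move=> i; rewrite -ltz_nat gez0_abs; last exact: modz_ge0.
  by apply: ltz_pmod; rewrite ltz_nat.
pose k := [ffun i => Ordinal (kb i)].
apply/mapP; exists k; first by rewrite mem_enum.
apply: piqP; apply: eqm_sum => i; rewrite ffunE /=.
exists (s`_i *~ (c i %/ m%:Z)%Z).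
rewrite !pmulrn -mulrzA gez0_abs; last exact: modz_ge0.
by rewrite -mulrzBr {1}(divz_eq (c i) m%:Z) addrK.
Qed.

Definition ext n (ca : 'I_n -> int) : nat -> int :=
  fun i => if insub i is Some j then ca j else 0.
Lemma ext_ord n (ca : 'I_n -> int) (j : 'I_n) : ext ca j = ca j.
Proof. by rewrite /ext valK. Qed.
Lemma ext_supp n (ca : 'I_n -> int) : supp n (ext ca).
Proof. by move=> i hi; rewrite /ext insubF // ltnNge hi. Qed.

Theorem lemma5 (K : nuRing) : additively_fg K -> finitely_separable K.
Proof.
move=> [s hs] a A [A0 AB AM] naA.
pose n := size s.
pose phi (c : nat -> int) : K := \sum_(i < n) s`_i *~ c i.
pose L c := supp n c /\ phi c \in A.
have phiB : forall c c', phi (fun i => c i - c' i) = phi c - phi c'.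
  by move=> c c'; rewrite /phi -sumrB; apply: eq_bigr => i _; rewrite mulrzBr.
have sL : subgrp L.
  split.
    split; first by [].
    by rewrite /phi big1 // => i _; rewrite mulr0z.
  move=> x y [sx Ax] [sy Ay]; split.
    by move=> i hi; rewrite sx // sy // subrr.
  by rewrite phiB; apply: AB.
have phi_ext : forall ca, phi (ext ca) = \sum_(i < n) s`_i *~ ca i.
  by move=> ca; apply: eq_bigr => i _; rewrite ext_ord.
have [ca ea] := hs a.
have nLv : ~ L (ext ca) by move=> [_]; rewrite phi_ext -ea; apply/negP.
have [m [mp Hm]] := @sepZ n L (ext ca) sL (fun x Lx => Lx.1) (ext_supp ca) nLv.
exists (QR K m), (fun x => piq m x); split.
- exact: QR_fin mp hs.
- exact: QR_hom.
move=> b bA; apply/eqP => e.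
have [w ew] := eqm_sym (piq_eq e).
have [cw ecw] := hs w.
apply: (Hm (fun i => ext ca i - m%:Z * ext cw i) (ext cw)); last first.
  by move=> i; rewrite subrK.
split.
  by move=> i hi; rewrite !ext_supp // mulr0 subrr.
rewrite phiB phi_ext -ea.
have -> : phi (fun i => m%:Z * ext cw i) = w *+ m.
  rewrite ecw -sumrMnl; apply: eq_bigr => i _.
  by rewrite ext_ord mulrC mulrzA -pmulrn.
by rewrite -ew opprB addrC subrK.
Qed.
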